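(* For every normal-form term $E$ (in $\eta$-long form) and every ground type $t$: $\cdot\vdash E : t$ (declarative typing in the empty environment) holds if and only if $\cdot\vdash E\Leftarrow t$ (concrete algorithmic checking in the empty environment) holds.
   Context: Fix a set of type constructors, each with a fixed arity, and an infinite set of type variables. Base types are $B ::= \tau \mid C\,B_1\ldots B_k$; ground base types $b$ contain no type variables. Types are $T ::= B\mid B\to T$; ground types $t ::= b \mid b\to t$. A polytype is $\forall\tau_1\ldots\tau_n.T$. A component library $\Lambda$ is a finite map from component names $c$ to polytypes; the arity of $c$ is the number of arrows in $\Lambda(c)$. Substitutions $\sigma$ map type variables to base types (identity elsewhere). A bottom type $\bot$ is added; $\mathbf{B}_\bot$ = base types $\cup\{\bot\}$. $T'\sqsubseteq T$ iff $T'=\sigma T$ for some $\sigma$; $\bot\sqsubseteq B$ for all $B$; $\equiv$ is mutual $\sqsubseteq$. The bottom substitution $\sigma_\bot$ sends every type to $\bot$, and every substitution maps $\bot$ to $\bot$. $\mathrm{mgu}$ denotes the most general (simultaneous) unifier of a sequence of pairs of types, which is $\sigma_\bot$ if no proper unifier exists and the identity for the empty sequence. $\mathrm{fresh}(\forall\bar\tau.T)$ renames $\bar\tau$ to fresh variables. Type transformer: if $\mathrm{fresh}(\Lambda(c))=B'_1\to\cdots\to B'_m\to B'$ then $[\![c]\!](B_1,\ldots,B_m)=\sigma B'$ with $\sigma=\mathrm{mgu}(B_1,B'_1;\ldots;B_m,B'_m)$. Terms (in $\eta$-long form): application terms $e ::= x \mid c(e_1,\ldots,e_m)$ with $m$ the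 arity of $c$; normal-form terms $E ::= e\mid \lambda x.E$. A typing environment $\Gamma$ maps variables to ground base types. Declarative typing $\Gamma\vdash E:t$ ($t$ ground): (Var) if $\Gamma(x)=b$ then $\Gamma\vdash x:b$; (App) if $\Lambda(c)=\forall\bar\tau.T$, $\sigma T=b_1\to\cdots\to b_m\to b$ is ground and $\Gamma\vdash e_i:b_i$ for all $i$, then $\Gamma\vdash c(e_1,\ldots,e_m):b$; (Fun) if $\Gamma,x{:}b\vdash E:t$ then $\Gamma\vdash\lambda x.E : b\to t$. Concrete algorithmic inference $\Gamma\vdash e\Rightarrow B$: if $\Gamma(x)=b$ then $\Gamma\vdash x\Rightarrow b$; if $\Gamma\vdash e_i\Rightarrow B_i$ for all $i$ then $\Gamma\vdash c(e_1,\ldots,e_m)\Rightarrow [\![c]\!](B_1,\ldots,B_m)$. Concrete algorithmic checking $\Gamma\vdash E\Leftarrow t$: if $\Gamma,x{:}b\vdash E\Leftarrow t$ then $\Gamma\vdash\lambda x.E\Leftarrow b\to t$; if $\Gamma\vdash e\Rightarrow B$ and $b\sqsubseteq B$ then $\Gamma\vdash e\Leftarrow b$. *)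

(* Defs.v *)
From Stdlib Require Import List Arith.
Import ListNotations.
Set Implicit Arguments.

(* Type variables are natural numbers (an infinite set).             *)
Section Types.
Variable Con : Type.
Variable ar : Con -> nat.

Inductive btype : Type :=
| TV (n : nat)
| TC (c : Con) (l : list btype).

Fixpoint bvars (B : btype) : list nat :=
  match B with
  | TV n => [n]
  | TC _ l => flat_map bvars l
  end.

Fixpoint bwf (B : btype) : bool :=
  match B with
  | TV _ => true
  | TC c l => Nat.eqb (length l) (ar c) && forallb bwf l
  end.

Fixpoint bsubst (s : nat -> btype) (B : btype) : btype :=
  match B with
  | TV n => s n
  | TC c l => TC c (map (bsubst s) l)
  end.

Definition bground (B : btype) : Prop := bvars B = [].

Inductive ty : Type :=
| Base (B : btype)
| Arr (B : btype) (T : ty).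

Fixpoint tvars (T : ty) : list nat :=
  match T with
  | Base B => bvars B
  | Arr B T => bvars B ++ tvars T
  end.

Fixpoint twf (T : ty) : bool :=
  match T with
  | Base B => bwf B
  | Arr B T => bwf B && twf T
  end.

Fixpoint tsubst (s : nat -> btype) (T : ty) : ty :=
  match T with
  | Base B => Base (bsubst s B)
  | Arr B T => Arr (bsubst s B) (tsubst s T)
  end.

Fixpoint targs (T : ty) : list btype :=
  match T with
  | Base _ => []
  | Arr B T => B :: targs T
  end.

Fixpoint tres (T : ty) : btype :=
  match T with
  | Base B => B
  | Arr _ T => tres T
  end.

Definition tground (T : ty) : Prop := tvars T = [].

(* B_bot = base types + bottom; None = bottom *)
Definition btb := option btype.
Definition btb_vars (X : btb) : list nat :=
  match X with Some B => bvars B | None => [] end.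

Definition subst := option (nat -> btype).
Definition sigma_bot : subst := None.

Definition bapp (sg : subst) (X : btb) : btb :=
  match sg, X with
  | Some s, Some B => Some (bsubst s B)
  | _, _ => None
  end.

(* X ⊑ Y  iff  X = sigma Y for some sigma (this includes ⊥ ⊑ B via sigma_bot) *)
Definition sqle (X Y : btb) : Prop := exists sg : subst, X = bapp sg Y.

Definition unifies (sg : subst) (ps : list (btb * btb)) : Prop :=
  Forall (fun p => bapp sg (fst p) = bapp sg (snd p)) ps.

(* sigma is a most general unifier of ps; it is sigma_bot iff no proper
   unifier exists. (mgu's are unique only up to renaming.) *)
Definition is_mgu (ps : list (btb * btb)) (sg : subst) : Prop :=
  match sg with
  | Some s =>
      unifies (Some s) ps /\
      (forall s', unifies (Some s') ps ->
                  exists d : nat -> btype, forall n, s' n = bsubst d (s n))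
  | None => forall s', ~ unifies (Some s') ps
  end.

End Types.

Section Terms.
Variable Comp : Type.

Inductive aterm : Type :=
| Var (x : nat)
| App (c : Comp) (es : list aterm).

Inductive nterm : Type :=
| Ate (e : aterm)
| Lam (x : nat) (E : nterm).
End Terms.

(* Typing.  A component library Lam : Comp -> ty Con; the polytype of *)
(* c is  forall (all variables of Lam c). Lam c  (closed polytypes).  *)
Section Typing.
Variables Con Comp : Type.
Variable Lib : Comp -> ty Con.

Definition env := nat -> option (btype Con).
Definition empty_env : env := fun _ => None.
Definition upd (G : env) (x : nat) (b : btype Con) : env :=
  fun y => if Nat.eqb y x then Some b else G y.

Inductive adecl (G : env) : aterm Comp -> btype Con -> Prop :=
| D_Var x b : G x = Some b -> adecl G (Var Comp x) b
| D_App c es (s : nat -> btype Con) :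
    tground (tsubst s (Lib c)) ->
    Forall2 (adecl G) es (targs (tsubst s (Lib c))) ->
    adecl G (App c es) (tres (tsubst s (Lib c))).

Inductive decl (G : env) : nterm Comp -> ty Con -> Prop :=
| D_Base e b : adecl G e b -> decl G (Ate e) (Base b)
| D_Fun x E b t : decl (upd G x b) E t -> decl G (Lam x E) (Arr b t).

Definition pw_disjoint (ls : list (list nat)) : Prop :=
  forall i j, i <> j -> i < length ls -> j < length ls ->
    forall n, In n (nth i ls []) -> ~ In n (nth j ls []).

(* The type transformer [[c]] is
   rendered relationally:
   - fresh(Lib c) = rename (all) variables of Lib c injectively (rho) to
     variables not occurring in the argument types B_i; fresh variables
     are global, so the argument types of distinct subderivations have
     pairwise disjoint variables;
   - sigma = mgu(B1,B'1; ...; Bm,B'm), result sigma B'. *)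
Inductive infer (G : env) : aterm Comp -> btb Con -> Prop :=
| I_Var x b : G x = Some b -> infer G (Var Comp x) (Some b)
| I_App c es (Bs : list (btb Con)) (rho : nat -> nat) (sg : subst Con) :
    Forall2 (infer G) es Bs ->
    pw_disjoint (map (@btb_vars Con) Bs) ->
    (forall a b, rho a = rho b -> a = b) ->
    (forall n, In n (tvars (Lib c)) ->
       forall B, In B Bs -> ~ In (rho n) (btb_vars B)) ->
    length Bs = length (targs (Lib c)) ->
    is_mgu (combine Bs
              (map (@Some _) (targs (tsubst (fun n => TV Con (rho n)) (Lib c)))))
           sg ->
    infer G (App c es)
      (bapp sg (Some (tres (tsubst (fun n => TV Con (rho n)) (Lib c))))).

Inductive check (G : env) : nterm Comp -> ty Con -> Prop :=
| C_Fun x E b t : check (upd G x b) E t -> check G (Lam x E) (Arr b t)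
| C_Base e b B : infer G e B -> sqle (Some b) B -> check G (Ate e) (Base b).

End Typing.

(* Main.v *)
Require Import Defs.
From Stdlib Require Import List Arith Lia.
Import ListNotations.
From Stdlib Require Import Classical.
Lemma classic_eq {A} (x y : A) : x = y \/ x <> y. Proof. apply classic. Qed.

Section U.
Variable Con : Type.
Notation bt := (btype Con).

Fixpoint bt_ind' (P : bt -> Prop) (HV : forall n, P (TV Con n))
  (HC : forall c l, Forall P l -> P (TC c l)) (B : bt) : P B :=
  match B with
  | TV _ n => HV n
  | TC c l => HC c l ((fix F l := match l return Forall P l with
                         | [] => Forall_nil _
                         | x :: r => Forall_cons _ (bt_ind' P HV HC x) (F r) end) l)
  end.

Fixpoint bsize (B : bt) : nat :=
  match B with TV _ _ => 1 | TC _ l => S (list_sum (map bsize l)) end.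

Lemma bsubst_comp (f g : nat -> bt) X :
  bsubst f (bsubst g X) = bsubst (fun k => bsubst f (g k)) X.
Proof.
  induction X using bt_ind'; simpl; auto.
  f_equal. rewrite map_map. induction H; simpl; f_equal; auto.
Qed.

Lemma bsubst_ext (f g : nat -> bt) X :
  (forall k, In k (bvars X) -> f k = g k) -> bsubst f X = bsubst g X.
Proof.
  induction X using bt_ind'; simpl; intros E.
  - apply E; auto.
  - f_equal. induction H; simpl in *; auto.
    f_equal.
    + apply H; intros; apply E; apply in_or_app; auto.
    + apply IHForall; intros; apply E; apply in_or_app; auto.
Qed.

Lemma bsubst_id X : bsubst (TV Con) X = X.
Proof.
  induction X using bt_ind'; simpl; auto.
  f_equal. induction H; simpl; f_equal; auto.
Qed.

Lemma bvars_bsubst (f : nat -> bt) X m :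
  In m (bvars (bsubst f X)) <-> exists k, In k (bvars X) /\ In m (bvars (f k)).
Proof.
  induction X using bt_ind'; simpl.
  - split; [intros; exists n; auto | intros [k [[<-|[]] Hk]]; auto].
  - induction H; simpl.
    + split; [intros [] | intros [k [[] _]]].
    + rewrite !in_app_iff, H, IHForall. split.
      * intros [[k [A B]]|[k [A B]]]; exists k; rewrite in_app_iff; auto.
      * intros [k [A B]]; rewrite in_app_iff in A; destruct A; [left|right]; exists k; auto.
Qed.

Lemma bground_subst (f : nat -> bt) X :
  (forall k, In k (bvars X) -> bvars (f k) = []) -> bvars (bsubst f X) = [].
Proof.
  intros H. destruct (bvars (bsubst f X)) as [|m r] eqn:E; auto.
  assert (Hm : In m (bvars (bsubst f X))) by (rewrite E; left; auto).
  apply bvars_bsubst in Hm. destruct Hm as [k [Hk Hm]]. rewrite H in Hm; auto. destruct Hm.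
Qed.

Lemma bsubst_ground (f : nat -> bt) X : bvars X = [] -> bsubst f X = X.
Proof.
  intros H. rewrite <- (bsubst_id X) at 2. apply bsubst_ext. rewrite H. intros _ [].
Qed.

Set Implicit Arguments.
Definition pvars (ps : list (bt * bt)) := flat_map (fun p => bvars (fst p) ++ bvars (snd p)) ps.
Fixpoint psize (ps : list (bt * bt)) :=
  match ps with [] => 0 | p :: r => bsize (fst p) + bsize (snd p) + psize r end.
Definition nv ps := length (nodup Nat.eq_dec (pvars ps)).
Definition unif (u : nat -> bt) ps := Forall (fun p => bsubst u (fst p) = bsubst u (snd p)) ps.

Definition Pmgu ps := exists s, unif s ps /\
  (forall u, unif u ps -> exists d, forall n, u n = bsubst d (s n)) /\
  (forall n, s n = TV Con n \/ incl (bvars (s n)) (pvars ps)).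

Lemma nv_le a b : incl (pvars a) (pvars b) -> nv a <= nv b.
Proof.
  intros H. unfold nv. apply NoDup_incl_length. apply NoDup_nodup.
  intros x Hx. rewrite nodup_In in *. auto.
Qed.

Lemma nv_lt a b n : incl (pvars a) (pvars b) -> In n (pvars b) -> ~ In n (pvars a) -> nv a < nv b.
Proof.
  intros H Hn Hn'. unfold nv.
  eapply Nat.le_lt_trans; [| apply (remove_length_lt Nat.eq_dec)].
  2: { rewrite nodup_In. exact Hn. }
  apply NoDup_incl_length. apply NoDup_nodup.
  intros x Hx. rewrite nodup_In in Hx. apply in_in_remove.
  - intro; subst; auto.
  - rewrite nodup_In; auto.
Qed.

Lemma size_in_le (u : nat -> bt) n t : In n (bvars t) -> bsize (u n) <= bsize (bsubst u t).
Proof.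
  induction t using bt_ind'; simpl.
  - intros [<-|[]]; auto.
  - intros Hn. induction H; simpl in *. destruct Hn.
    apply in_app_iff in Hn. destruct Hn.
    + specialize (H H1). lia.
    + specialize (IHForall H1). lia.
Qed.

Lemma occurs (u : nat -> bt) n t : In n (bvars t) -> t <> TV Con n -> u n <> bsubst u t.
Proof.
  intros Hn Ht E. destruct t as [m|c l].
  - simpl in Hn. destruct Hn as [<-|[]]. auto.
  - simpl in Hn. apply in_flat_map in Hn. destruct Hn as [B [HB Hn]].
    assert (bsize (u n) <= bsize (bsubst u B)) by (apply size_in_le; auto).
    assert (bsize (bsubst u B) <= list_sum (map bsize (map (bsubst u) l))).
    { clear -HB. induction l; simpl in *. destruct HB.
      destruct HB; subst; [lia|]. specialize (IHl H); lia. }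
    assert (bsize (u n) = bsize (bsubst u (TC c l))) by (rewrite E; auto).
    simpl in H1. lia.
Qed.

Definition sub n (t : bt) := fun m => if Nat.eqb m n then t else TV Con m.

Lemma sub_absorb (u : nat -> bt) n t X : u n = bsubst u t ->
  bsubst u (bsubst (sub n t) X) = bsubst u X.
Proof.
  intros H. rewrite bsubst_comp. apply bsubst_ext. intros k _. unfold sub.
  destruct (Nat.eqb_spec k n); subst; simpl; auto.
Qed.

Lemma elim_step n t rest : ~ In n (bvars t) -> t <> TV Con n ->
  Pmgu (map (fun p => (bsubst (sub n t) (fst p), bsubst (sub n t) (snd p))) rest) ->
  Pmgu ((TV Con n, t) :: rest).
Proof.
  intros Hocc Ht [s' [Hu [Hg Hr]]].
  set (ps' := map _ rest) in *.
  assert (Hinc : incl (pvars ps') (pvars ((TV Con n, t) :: rest))).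
  { intros m Hm. unfold ps', pvars in Hm. rewrite flat_map_concat_map, map_map, <- flat_map_concat_map in Hm.
    apply in_flat_map in Hm. destruct Hm as [p [Hp Hm]]. simpl.
    assert (HH : In m (bvars t) \/ In m (bvars (fst p) ++ bvars (snd p))).
    { apply in_app_iff in Hm; destruct Hm as [Hm|Hm]; apply bvars_bsubst in Hm; destruct Hm as [k [Hk Hm]];
      unfold sub in Hm; destruct (Nat.eqb_spec k n); auto;
      simpl in Hm; destruct Hm as [<-|[]]; right; apply in_app_iff; auto. }
    destruct HH; [right; apply in_app_iff; left; auto|].
    right. apply in_app_iff. right. apply in_flat_map. exists p; auto. }
  exists (fun k => bsubst s' (sub n t k)). split; [|split].
  - constructor.
    + simpl. unfold sub at 1. rewrite Nat.eqb_refl.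
      rewrite <- bsubst_comp. f_equal. symmetry. transitivity (bsubst (TV Con) t); [|apply bsubst_id].
      apply bsubst_ext. intros k Hk. unfold sub. destruct (Nat.eqb_spec k n); subst; tauto.
    + unfold unif, ps' in Hu. rewrite Forall_map in Hu.
      eapply Forall_impl; [|exact Hu]. simpl. intros p E. rewrite <- !bsubst_comp. exact E.
  - intros u Hu2. inversion Hu2; subst. simpl in H1.
    destruct (Hg u) as [d Hd].
    { unfold ps', unif. rewrite Forall_map. eapply Forall_impl; [|exact H2]. simpl.
      intros p E. rewrite !sub_absorb; auto. }
    exists d. intros k. unfold sub. destruct (Nat.eqb_spec k n); subst.
    + rewrite H1, bsubst_comp. apply bsubst_ext. intros; auto.
    + simpl. auto.
  - intros k. unfold sub. destruct (Nat.eqb_spec k n); subst.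
    + right. intros m Hm. apply bvars_bsubst in Hm. destruct Hm as [j [Hj Hm]].
      destruct (Hr j) as [E|E].
      * rewrite E in Hm. destruct Hm as [<-|[]]. simpl. right. apply in_app_iff; auto.
      * apply Hinc, E, Hm.
    + simpl. destruct (Hr k) as [E|E]; auto. right. intros m Hm; apply Hinc, E, Hm.
Qed.

Lemma pvars_cons a b rest m : In m (pvars ((a,b)::rest)) <-> In m (bvars a) \/ In m (bvars b) \/ In m (pvars rest).
Proof. unfold pvars; simpl. rewrite !in_app_iff. tauto. Qed.

Lemma Pmgu_swap a b rest : Pmgu ((a,b)::rest) -> Pmgu ((b,a)::rest).
Proof.
  intros [s [Hu [Hg Hr]]]. exists s. inversion Hu; subst. split; [|split].
  - constructor; simpl in *; auto.
  - intros u Hu2. inversion Hu2; subst. apply Hg. constructor; simpl in *; auto.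
  - intros k. destruct (Hr k); auto. right. intros m Hm. apply pvars_cons. apply H, pvars_cons in Hm. tauto.
Qed.

Lemma Pmgu_drop X rest : Pmgu rest -> Pmgu ((X,X)::rest).
Proof.
  intros [s [Hu [Hg Hr]]]. exists s. split; [|split].
  - constructor; auto.
  - intros u Hu2. inversion Hu2; subst. apply Hg; auto.
  - intros k. destruct (Hr k); auto. right. intros m Hm. apply pvars_cons. apply H in Hm. tauto.
Qed.

Lemma combine_unif (f : bt -> bt) l l' : length l = length l' ->
  (Forall (fun p => f (fst p) = f (snd p)) (combine l l') <-> map f l = map f l').
Proof.
  revert l'; induction l; destruct l'; simpl; intros; try discriminate.
  - split; auto.
  - rewrite Forall_cons_iff, IHl by lia. simpl. split.
    + intros [-> ->]; auto.
    + intros E; injection E; auto.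
Qed.

Lemma pvars_combine l l' m : In m (pvars (combine l l')) -> In m (flat_map (@bvars Con) l) \/ In m (flat_map (@bvars Con) l').
Proof.
  revert l'; induction l; destruct l'; simpl; auto.
  intros H. apply in_app_iff in H. rewrite !in_app_iff. destruct H as [H|H].
  - apply in_app_iff in H; tauto.
  - apply IHl in H. tauto.
Qed.

Lemma pvars_app a b m : In m (pvars (a ++ b)) <-> In m (pvars a) \/ In m (pvars b).
Proof. unfold pvars. rewrite flat_map_app, in_app_iff. tauto. Qed.

Lemma Pmgu_decomp c l l' rest : length l = length l' -> Pmgu (combine l l' ++ rest) ->
  Pmgu ((TC c l, TC c l')::rest).
Proof.
  intros Hl [s [Hu [Hg Hr]]]. exists s. unfold unif in Hu. rewrite Forall_app in Hu. destruct Hu as [Hu1 Hu2].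
  split; [|split].
  - constructor; auto. simpl. f_equal. apply combine_unif; auto.
  - intros u Hu. inversion Hu; subst. simpl in H1. injection H1; intros E.
    apply Hg. unfold unif. rewrite Forall_app. split; auto. apply combine_unif; auto.
  - intros k. destruct (Hr k); auto. right. intros m Hm. apply pvars_cons. apply H, pvars_app in Hm. simpl.
    destruct Hm as [Hm|Hm]; [|tauto]. apply pvars_combine in Hm. tauto.
Qed.

Lemma psize_app a b : psize (a ++ b) = psize a + psize b.
Proof. induction a; simpl; lia. Qed.

Lemma psize_combine l l' : length l = length l' ->
  psize (combine l l') = list_sum (map bsize l) + list_sum (map bsize l').
Proof. revert l'; induction l; destruct l'; simpl; intros; try discriminate; auto. rewrite IHl; lia. Qed.

Lemma bsize_pos X : 1 <= bsize X.
Proof. destruct X; simpl; lia. Qed.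

Lemma unif_cons u a b rest : unif u ((a,b)::rest) <-> bsubst u a = bsubst u b /\ unif u rest.
Proof. unfold unif. rewrite Forall_cons_iff. tauto. Qed.

Lemma elim_full k n t rest : (forall ps, nv ps < k -> (exists u, unif u ps) -> Pmgu ps) ->
  nv ((TV Con n, t) :: rest) < S k -> t <> TV Con n -> (exists u, unif u ((TV Con n, t) :: rest)) ->
  Pmgu ((TV Con n, t) :: rest).
Proof.
  intros IH Hk Ht [u Hu]. apply unif_cons in Hu. destruct Hu as [Hu1 Hu2]. simpl in Hu1.
  assert (Hocc : ~ In n (bvars t)) by (intro; eapply occurs; eauto).
  apply elim_step; auto. apply IH.
  - eapply Nat.lt_le_trans; [|apply Nat.lt_succ_r; exact Hk].
    apply nv_lt with n.
    + intros m Hm. unfold pvars in Hm. rewrite flat_map_concat_map, map_map, <- flat_map_concat_map in Hm.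
      apply in_flat_map in Hm. destruct Hm as [p [Hp Hm]]. apply pvars_cons.
      apply in_app_iff in Hm; destruct Hm as [Hm|Hm]; apply bvars_bsubst in Hm; destruct Hm as [j [Hj Hm]];
      unfold sub in Hm; destruct (Nat.eqb_spec j n); auto;
      simpl in Hm; destruct Hm as [<-|[]]; right; right; apply in_flat_map; exists p; rewrite in_app_iff; auto.
    + apply pvars_cons; simpl; auto.
    + intros Hm. unfold pvars in Hm. rewrite flat_map_concat_map, map_map, <- flat_map_concat_map in Hm.
      apply in_flat_map in Hm. destruct Hm as [p [Hp Hm]].
      apply in_app_iff in Hm; destruct Hm as [Hm|Hm]; apply bvars_bsubst in Hm; destruct Hm as [j [Hj Hm]];
      unfold sub in Hm; destruct (Nat.eqb_spec j n); auto;
      simpl in Hm; destruct Hm as [E|[]]; auto.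
  - exists u. unfold unif. rewrite Forall_map. eapply Forall_impl; [|exact Hu2]. simpl.
    intros p E. rewrite !sub_absorb; auto.
Qed.

Theorem unify ps0 : (exists u, unif u ps0) -> Pmgu ps0.
Proof.
  assert (forall k m ps, nv ps < k -> psize ps < m -> (exists u, unif u ps) -> Pmgu ps).
  { induction k; intros m ps Hk; [lia|]. revert ps Hk. induction m; intros ps Hk Hm Hex; [lia|].
    destruct ps as [|[X Y] rest].
    - exists (TV Con). split; [constructor|split].
      + intros u _. exists u. intros; simpl; auto.
      + auto.
    - assert (IHk' : forall ps, nv ps < k -> (exists u, unif u ps) -> Pmgu ps)
        by (intros; eapply IHk; eauto).
      destruct X as [n|c l].
      + destruct (classic_eq Y (TV Con n)) as [->|Hne].
        * apply Pmgu_drop. apply IHm.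
          -- eapply Nat.le_lt_trans; [|exact Hk]. apply nv_le. intros z Hz; apply pvars_cons; auto.
          -- simpl in Hm. pose proof (bsize_pos (TV Con n)). simpl in *. lia.
          -- destruct Hex as [u Hu]. apply unif_cons in Hu. exists u; tauto.
        * eapply elim_full; eauto.
      + destruct Y as [n|c' l'].
        * apply Pmgu_swap. eapply elim_full; [exact IHk'| |discriminate|].
          { eapply Nat.le_lt_trans; [|exact Hk]. apply nv_le. intros z Hz; apply pvars_cons; apply pvars_cons in Hz; tauto. }
          destruct Hex as [u Hu]. apply unif_cons in Hu. exists u. apply unif_cons. split; [symmetry|]; tauto.
        * destruct Hex as [u Hu]. apply unif_cons in Hu. destruct Hu as [Hu1 Hu2]. simpl in Hu1.
          injection Hu1; intros E1 E2; subst c'.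
          assert (Hl : length l = length l') by (rewrite <- (length_map (bsubst u) l), E1, length_map; auto).
          apply Pmgu_decomp; auto. apply IHm.
          -- eapply Nat.le_lt_trans; [|exact Hk]. apply nv_le. intros z Hz.
             apply pvars_app in Hz. apply pvars_cons. simpl. destruct Hz as [Hz|Hz]; [|tauto].
             apply pvars_combine in Hz. tauto.
          -- rewrite psize_app, psize_combine by auto. simpl in Hm. lia.
          -- exists u. unfold unif; rewrite Forall_app. split; auto. apply combine_unif; auto. }
  intros Hex. eapply H; eauto.
Qed.

End U.

Unset Implicit Arguments.

Section T.
Variables Con Comp : Type.
Variable Lib : Comp -> ty Con.
Notation bt := (btype Con).

Lemma tres_tsubst (f : nat -> bt) T : tres (tsubst f T) = bsubst f (tres T).
Proof. induction T; simpl; auto. Qed.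
Lemma targs_tsubst (f : nat -> bt) T : targs (tsubst f T) = map (bsubst f) (targs T).
Proof. induction T; simpl; f_equal; auto. Qed.
Lemma tground_tsubst (f : nat -> bt) T : (forall k, bvars (f k) = []) -> tvars (tsubst f T) = [].
Proof. intros H; induction T; simpl; [apply bground_subst; auto|]. rewrite bground_subst, IHT; auto. Qed.

Lemma F2_comp {A B C} (P : A -> B -> Prop) (Q : B -> C -> Prop) (R : A -> C -> Prop) l1 l2 l3 :
  Forall2 P l1 l2 -> Forall2 Q l2 l3 -> (forall x y z, P x y -> Q y z -> R x z) -> Forall2 R l1 l3.
Proof.
  intros H1; revert l3; induction H1; intros l3 H2 HR; inversion H2; subst; constructor; eauto.
Qed.
Lemma F2_map_r {A B C} (P : A -> C -> Prop) (f : B -> C) l l' :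
  Forall2 P l (map f l') <-> Forall2 (fun x y => P x (f y)) l l'.
Proof.
  revert l'; induction l; destruct l'; simpl; split; intros H; inversion H; subst; constructor; auto;
  apply IHl; auto.
Qed.
Lemma F2_map_l {A B C} (P : C -> B -> Prop) (f : A -> C) l l' :
  Forall2 P (map f l) l' <-> Forall2 (fun x y => P (f x) y) l l'.
Proof.
  revert l'; induction l; destruct l'; simpl; split; intros H; inversion H; subst; constructor; auto;
  apply IHl; auto.
Qed.
Lemma F2_impl {A B} (P Q : A -> B -> Prop) l l' : (forall x y, P x y -> Q x y) -> Forall2 P l l' -> Forall2 Q l l'.
Proof. intros H H1; induction H1; constructor; auto. Qed.

Lemma F2_impl_in {A B} (P Q : A -> B -> Prop) l l' : (forall x y, In x l -> P x y -> Q x y) -> Forall2 P l l' -> Forall2 Q l l'.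
Proof. intros H H1; induction H1; constructor; simpl in *; auto. Qed.

Lemma unifies_F2 (s : nat -> bt) Bs As : length Bs = length As ->
  unifies (Some s) (combine Bs (map (@Some _) As)) ->
  Forall2 (fun X A => exists Bi, X = Some Bi /\ bsubst s Bi = bsubst s A) Bs As.
Proof.
  revert As; induction Bs; destruct As; simpl; intros Hl Hu; try discriminate; constructor.
  - inversion Hu; subst. simpl in H1. destruct a; simpl in H1; try discriminate.
    injection H1; eauto.
  - inversion Hu; subst. apply IHBs; auto.
Qed.

Lemma combine_some (Bs As : list bt) : combine (map (@Some _) Bs) (map (@Some _) As) =
  map (fun p => (Some (fst p), Some (snd p))) (combine Bs As).
Proof. revert As; induction Bs; destruct As; simpl; f_equal; auto. Qed.

Lemma unifies_unif (s : nat -> bt) ps :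
  unifies (Some s) (map (fun p => (Some (fst p), Some (snd p))) ps) <-> unif s ps.
Proof.
  unfold unifies, unif. rewrite Forall_map. simpl. split; apply Forall_impl; intros p H.
  - injection H; auto.
  - rewrite H; auto.
Qed.

Lemma F2_combine {A B} (R : A -> B -> Prop) l l' : Forall2 R l l' -> Forall (fun p => R (fst p) (snd p)) (combine l l').
Proof. intros H; induction H; simpl; constructor; auto. Qed.

Fixpoint infer_ind' (G : env Con) (P : aterm Comp -> btb Con -> Prop)
  (HV : forall x b, G x = Some b -> P (Var Comp x) (Some b))
  (HA : forall c es Bs (rho : nat -> nat) (sg : subst Con),
     Forall2 (infer Lib G) es Bs -> Forall2 P es Bs ->
    pw_disjoint (map (@btb_vars Con) Bs) ->
    (forall a b, rho a = rho b -> a = b) ->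
    (forall n, In n (tvars (Lib c)) ->
       forall B, In B Bs -> ~ In (rho n) (btb_vars B)) ->
    length Bs = length (targs (Lib c)) ->
    is_mgu (combine Bs
              (map (@Some _) (targs (tsubst (fun n => TV Con (rho n)) (Lib c)))))
           sg ->
    P (App c es)
      (bapp sg (Some (tres (tsubst (fun n => TV Con (rho n)) (Lib c))))))
  e X (H : infer Lib G e X) {struct H} : P e X :=
  match H with
  | @I_Var _ _ _ _ x b Hx => HV x b Hx
  | @I_App _ _ _ _ c es Bs rho sg HF Hd Hi Hf Hl Hm =>
     HA c es Bs rho sg HF
      ((fix F2 es Bs (h : Forall2 (infer Lib G) es Bs) : Forall2 P es Bs :=
         match h with
         | @Forall2_nil _ _ _ => Forall2_nil _
         | @Forall2_cons _ _ _ x y l l' h1 h2 => Forall2_cons x y (infer_ind' G P HV HA x y h1) (F2 l l' h2)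
         end) es Bs HF) Hd Hi Hf Hl Hm
  end.


Fixpoint adecl_ind' (G : env Con) (P : aterm Comp -> bt -> Prop)
  (HV : forall x b, G x = Some b -> P (Var Comp x) b)
  (HA : forall c es (s : nat -> bt), tground (tsubst s (Lib c)) ->
     Forall2 (adecl Lib G) es (targs (tsubst s (Lib c))) ->
     Forall2 P es (targs (tsubst s (Lib c))) ->
     P (App c es) (tres (tsubst s (Lib c))))
  e b (H : adecl Lib G e b) {struct H} : P e b :=
  match H with
  | @D_Var _ _ _ _ x b Hx => HV x b Hx
  | @D_App _ _ _ _ c es s Hg HF =>
     HA c es s Hg HF
      ((fix F2 es Bs (h : Forall2 (adecl Lib G) es Bs) : Forall2 P es Bs :=
         match h with
         | @Forall2_nil _ _ _ => Forall2_nil _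
         | @Forall2_cons _ _ _ x y l l' h1 h2 => Forall2_cons x y (adecl_ind' G P HV HA x y h1) (F2 l l' h2)
         end) es _ HF)
  end.

Definition genv (G : env Con) := forall x b, G x = Some b -> bvars b = [].

Lemma sound G : genv G -> forall e X, infer Lib G e X ->
  forall B, X = Some B -> forall d, bvars (bsubst d B) = [] -> adecl Lib G e (bsubst d B).
Proof.
  intros HG e X H. revert e X H.
  refine (infer_ind' G (fun e X => forall B, X = Some B -> forall d, bvars (bsubst d B) = [] -> adecl Lib G e (bsubst d B)) _ _).
  - intros x b Hx B E d _. injection E; intros <-. rewrite bsubst_ground by (eapply HG; eauto).
    constructor; auto.
  - intros c es Bs rho sg H H0 Hdis Hinj Hfr Hlen Hm.
    intros B E d Hgr. destruct sg as [s|]; simpl in E; try discriminate.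
    injection E; intros <-. destruct Hm as [Hu _].
    set (L := Lib c) in *. set (rp := fun n => TV Con (rho n)) in *.
    set (g0 := bsubst d (bsubst s (tres (tsubst rp L)))) in *.
    set (d' := fun k => match bvars (d k) with [] => d k | _ => g0 end).
    assert (Hd'g : forall k, bvars (d' k) = []).
    { intros k; unfold d'. destruct (bvars (d k)) eqn:Ek; auto. }
    set (sc := fun k => bsubst d' (bsubst s (rp k))).
    assert (Hres : tres (tsubst sc L) = g0).
    { rewrite tres_tsubst. unfold sc. rewrite <- bsubst_comp, <- bsubst_comp, <- tres_tsubst.
      unfold g0. apply bsubst_ext. intros k Hk. unfold d'.
      destruct (bvars (d k)) eqn:Ek; auto. exfalso.
      assert (In n (bvars g0)). { apply bvars_bsubst. exists k. rewrite Ek; split; auto. left; auto. }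
      rewrite Hgr in H1. destruct H1. }
    rewrite <- Hres. constructor.
    + apply tground_tsubst. intros k. unfold sc. apply bground_subst. auto.
    + rewrite targs_tsubst. apply F2_map_r.
      assert (Hl2 : length Bs = length (targs (tsubst rp L))) by (rewrite targs_tsubst, length_map; auto).
      pose proof (unifies_F2 s Bs _ Hl2 Hu) as HF. rewrite targs_tsubst in HF. apply F2_map_r in HF.
      eapply F2_comp; [exact H0|exact HF|]. simpl. intros e X A0 HP [Bi [-> HB]].
      unfold sc. rewrite <- bsubst_comp, <- bsubst_comp, <- HB, bsubst_comp.
      apply HP; auto. apply bground_subst. intros; apply bground_subst; auto.
Qed.


Fixpoint pd (ls : list (list nat)) : Prop :=
  match ls with [] => True | l :: r => (forall n, In n l -> forall l', In l' r -> ~ In n l') /\ pd r end.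

Lemma pd_pw ls : pd ls -> pw_disjoint ls.
Proof.
  induction ls as [|l r IH]; intros H i j Hij Hi Hj n Hn Hn'; simpl in *; [lia|].
  destruct H as [H1 H2]. destruct i as [|i], j as [|j]; try lia.
  - apply (H1 n Hn (nth j r [])); [apply nth_In; lia| exact Hn'].
  - apply (H1 n Hn' (nth i r [])); [apply nth_In; lia| exact Hn].
  - apply (IH H2 i j) with n; auto; lia.
Qed.

Lemma in_le_max n l : In n l -> n <= list_max l.
Proof.
  intros H. pose proof (proj1 (list_max_le l (list_max l)) (le_n _)) as F.
  rewrite Forall_forall in F. auto.
Qed.

Definition avoid (B : bt) (A : list nat) := forall n, In n (bvars B) -> ~ In n A.

Lemma args_build G es bs :
  Forall2 (fun e b => forall A, exists B, infer Lib G e (Some B) /\ avoid B A /\ exists d, b = bsubst d B) es bs ->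
  forall A, exists Bs (d : nat -> bt), Forall2 (fun e B => infer Lib G e (Some B)) es Bs /\
    Forall2 (fun B b => b = bsubst d B) Bs bs /\ (forall B, In B Bs -> avoid B A) /\ pd (map (@bvars Con) Bs).
Proof.
  intros H; induction H; intros A.
  - exists [], (TV Con). simpl. repeat split; auto. intros _ [].
  - destruct (IHForall2 A) as [Bs [d [H1 [H2 [H3 H4]]]]].
    destruct (H (A ++ flat_map (@bvars Con) Bs)) as [B [HB1 [HB2 [dB HB3]]]].
    exists (B :: Bs), (fun k => if in_dec Nat.eq_dec k (bvars B) then dB k else d k).
    split; [constructor; auto|split; [|split]].
    + constructor.
      * rewrite HB3. apply bsubst_ext. intros k Hk. destruct (in_dec Nat.eq_dec k (bvars B)); tauto.
      * eapply F2_impl_in; [|exact H2]. simpl. intros Bi b HBi Hb. rewrite Hb. apply bsubst_ext.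
        intros k Hk. destruct (in_dec Nat.eq_dec k (bvars B)); auto.
        exfalso. apply (HB2 k i). apply in_or_app. right.
        apply in_flat_map. eauto.
    + intros B0 [<-|HB0] n Hn HnA.
      * apply (HB2 n Hn). apply in_or_app; auto.
      * exact (H3 B0 HB0 n Hn HnA).
    + simpl. split; auto. intros n Hn l0 Hl0 Hn'. apply in_map_iff in Hl0. destruct Hl0 as [Bi [<- HBi]].
      apply (HB2 n Hn). apply in_or_app. right. apply in_flat_map. eauto.
Qed.


Lemma complete G : genv G -> forall e b, adecl Lib G e b ->
  forall A, exists B, infer Lib G e (Some B) /\ avoid B A /\ exists d, b = bsubst d B.
Proof.
  intros HG e b H. revert e b H.
  refine (adecl_ind' G (fun e b => forall A, exists B, infer Lib G e (Some B) /\ avoid B A /\ exists d, b = bsubst d B) _ _).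
  - intros x b Hx A. exists b. split; [constructor; auto|split].
    + intros n Hn. rewrite (HG x b Hx) in Hn. destruct Hn.
    + exists (TV Con). rewrite bsubst_id; auto.
  - intros c es s0 Hg HF IH A.
    destruct (@args_build G _ _ IH A) as [Bs [d [H1 [H2 [H3 H4]]]]].
    set (N := S (list_max (A ++ flat_map (@bvars Con) Bs))).
    assert (HN : forall n, In n A \/ In n (flat_map (@bvars Con) Bs) -> n < N).
    { intros n Hn. unfold N. apply Nat.lt_succ_r, in_le_max, in_or_app. auto. }
    set (rho := fun n => n + N).
    set (rp := fun n => TV Con (rho n)).
    set (u := fun k => if N <=? k then s0 (k - N) else d k).
    assert (HF2 : Forall2 (fun Bi A0 => bsubst d Bi = bsubst s0 A0) Bs (targs (Lib c))).
    { rewrite targs_tsubst in H2. apply F2_map_r in H2. eapply F2_impl; [|exact H2]. simpl. intros; auto. }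
    assert (Hlen : length Bs = length (targs (Lib c))) by (eapply Forall2_length; eauto).
    assert (HuBs : forall Bi, In Bi Bs -> bsubst u Bi = bsubst d Bi).
    { intros Bi HBi. apply bsubst_ext. intros k Hk. unfold u.
      destruct (Nat.leb_spec N k); auto. exfalso.
      assert (k < N) by (apply HN; right; apply in_flat_map; eauto). lia. }
    assert (Hurp : forall X, bsubst u (bsubst rp X) = bsubst s0 X).
    { intros X. rewrite bsubst_comp. apply bsubst_ext. intros k _. simpl. unfold u, rho.
      destruct (Nat.leb_spec N (k + N)); [|lia]. f_equal; lia. }
    assert (Hunif : unif u (combine Bs (targs (tsubst rp (Lib c))))).
    { apply (F2_combine (fun x y => bsubst u x = bsubst u y)). rewrite targs_tsubst. apply F2_map_r.
      eapply F2_impl_in; [|exact HF2]. simpl. intros Bi A0 HBi E. rewrite Hurp, HuBs; auto. }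
    destruct (unify (ex_intro _ u Hunif)) as [s [Hs [Hg' Hr]]].
    exists (bsubst s (tres (tsubst rp (Lib c)))). split; [|split].
    + change (Some (bsubst s (tres (tsubst rp (Lib c))))) with (bapp (Some s) (Some (tres (tsubst rp (Lib c))))).
      apply (@I_App _ _ Lib G c es (map (@Some _) Bs) rho (Some s)).
      * apply F2_map_r. exact H1.
      * replace (map (@btb_vars Con) (map (@Some _) Bs)) with (map (@bvars Con) Bs)
          by (rewrite map_map; reflexivity). apply pd_pw; auto.
      * intros a b E. unfold rho in E. lia.
      * intros n _ X HX Hin. apply in_map_iff in HX. destruct HX as [Bi [<- HBi]]. simpl in Hin.
        assert (n + N < N) by (apply HN; right; apply in_flat_map; eauto). lia.
      * rewrite length_map; auto.
      * rewrite combine_some. simpl. split.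
        -- apply unifies_unif. exact Hs.
        -- intros s' Hs'. apply Hg'. apply unifies_unif; auto.
    + intros n Hn HnA. apply bvars_bsubst in Hn. destruct Hn as [k [Hk Hnk]].
      rewrite tres_tsubst in Hk. apply bvars_bsubst in Hk. destruct Hk as [j [_ Hj]].
      simpl in Hj. destruct Hj as [Hj|[]]. unfold rho in Hj.
      assert (n < N) by (apply HN; auto).
      destruct (Hr k) as [E|E].
      * rewrite E in Hnk. simpl in Hnk. destruct Hnk as [Hnk|[]]. lia.
      * apply E, pvars_combine in Hnk. destruct Hnk as [Hnk|Hnk].
        -- apply in_flat_map in Hnk. destruct Hnk as [Bi [HBi Hn]]. exact (H3 Bi HBi n Hn HnA).
        -- apply in_flat_map in Hnk. destruct Hnk as [Ai [HAi Hn]].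
           rewrite targs_tsubst in HAi. apply in_map_iff in HAi. destruct HAi as [A0 [<- _]].
           apply bvars_bsubst in Hn. destruct Hn as [j' [_ Hj']]. simpl in Hj'.
           destruct Hj' as [Hj'|[]]. unfold rho in Hj'. lia.
    + destruct (Hg' u Hunif) as [d2 Hd2]. exists d2.
      rewrite bsubst_comp, tres_tsubst, <- Hurp, tres_tsubst. apply bsubst_ext. intros; auto.
Qed.

Lemma genv_upd G x b : genv G -> bvars b = [] -> genv (upd G x b).
Proof. intros H Hb y b' Hy. unfold upd in Hy. destruct (Nat.eqb y x); [injection Hy; intros <-; auto|eauto]. Qed.

Theorem main_gen E : forall G t, genv G -> tvars t = [] ->
  (decl Lib G E t <-> check Lib G E t).
Proof.
  induction E as [e|x E IH]; intros G t HG Ht; split; intros H; inversion H; subst.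
  - destruct (@complete G HG _ _ H1 []) as [B [HB [_ [d Hd]]]].
    econstructor; eauto. exists (Some d). simpl. rewrite Hd; auto.
  - match goal with Hq : sqle _ _ |- _ => destruct Hq as [sg Hsg] end. destruct sg as [s|], B as [B|]; simpl in Hsg; try discriminate.
    injection Hsg; intros ->. constructor. eapply sound; eauto.
  - simpl in Ht. apply app_eq_nil in Ht. destruct Ht.
    constructor. apply IH; auto. apply genv_upd; auto.
  - simpl in Ht. apply app_eq_nil in Ht. destruct Ht.
    constructor. apply IH; auto. apply genv_upd; auto.
Qed.

End T.

Theorem mainTheorem5 (Con Comp : Type) (ar : Con -> nat) (Lib : Comp -> ty Con)
  (Hfin : exists l : list Comp, forall c, In c l)
  (Hwf : forall c, twf ar (Lib c) = true)
  (E : nterm Comp) (t : ty Con) (Ht : tground t) (Htwf : twf ar t = true) :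
  decl Lib (empty_env Con) E t <-> check Lib (empty_env Con) E t.
Proof.
  apply main_gen; auto. intros x b H. discriminate.
Qed.
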